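(* Let $g_1, g_2 \in \mathbb{R}^d$, let $G = (g_1, g_2) \in \mathbb{R}^{d \times 2}$ be the matrix with columns $g_1, g_2$, and let $\alpha = (\alpha_1, \alpha_2)^T$ with $\alpha_1, \alpha_2 > 0$. If $G^T G \alpha = \frac{1}{\alpha}$, then $\frac{\alpha_1}{\alpha_2} = \frac{\|g_2\|}{\|g_1\|}$.
   Context: $\frac{1}{\alpha}$ denotes the componentwise reciprocal $(1/\alpha_1, 1/\alpha_2)^T$, and $\|\cdot\|$ is the Euclidean norm. *)

(* Defs.v *)
From HB Require Import structures.
From mathcomp Require Import all_boot all_order all_algebra.
Set Implicit Arguments. Unset Strict Implicit. Unset Printing Implicit Defensive.
Import Order.TTheory GRing.Theory Num.Theory.
Local Open Scope ring_scope.

Definition enorm (R : rcfType) (d : nat) (v : 'cV[R]_d) : R :=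
  Num.sqrt (\sum_(i < d) v i 0 ^+ 2).

Definition cinv (R : rcfType) (n : nat) (a : 'cV[R]_n) : 'cV[R]_n :=
  \col_i (a i 0)^-1.

(* Main.v *)
Require Import Defs.
From HB Require Import structures.
From mathcomp Require Import all_boot all_order all_algebra.
From mathcomp Require Import ring lra.
Import Order.TTheory GRing.Theory Num.Theory.
Local Open Scope ring_scope.

Theorem corollary1 (R : rcfType) (d : nat) (G : 'M[R]_(d, 2)) (alpha : 'cV[R]_2) :
  0 < alpha 0 0 -> 0 < alpha 1 0 ->
  G^T *m G *m alpha = cinv alpha ->
  alpha 0 0 / alpha 1 0 = enorm (col 1 G) / enorm (col 0 G).
Proof.
move=> ha hb E.
have P : forall i j : 'I_2, (G^T *m G) i j = \sum_(k < d) G k i * G k j.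
  by move=> i j; rewrite mxE; apply: eq_bigr => k _; rewrite !mxE.
have X : forall i, (G^T *m G *m alpha) i 0 =
   (\sum_(k < d) G k i * G k 0) * alpha 0 0 + (\sum_(k < d) G k i * G k 1) * alpha 1 0.
  move=> i; rewrite mxE big_ord_recl big_ord1 !P.
  by have -> : lift ord0 ord0 = 1 :> 'I_2 by apply/val_inj.
have E0 := congr1 (fun M : 'cV[R]_2 => M 0 0) E.
have E1 := congr1 (fun M : 'cV[R]_2 => M 1 0) E.
rewrite /= !X /cinv !mxE in E0 E1.
set a := alpha 0 0 in ha E0 E1 *.
set b := alpha 1 0 in hb E0 E1 *.
set n1 := \sum_(k < d) G k 0 * G k 0 in E0 E1.
set n2 := \sum_(k < d) G k 1 * G k 1 in E0 E1.
set c := \sum_(k < d) G k 1 * G k 0 in E0 E1.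
have c' : \sum_(k < d) G k 0 * G k 1 = c by apply: eq_bigr => k _; rewrite mulrC.
rewrite c' in E0 E1.
have En1 : enorm (col 0 G) = Num.sqrt n1.
  by rewrite /enorm; congr Num.sqrt; apply: eq_bigr => k _; rewrite !mxE expr2.
have En2 : enorm (col 1 G) = Num.sqrt n2.
  by rewrite /enorm; congr Num.sqrt; apply: eq_bigr => k _; rewrite !mxE expr2.
rewrite En1 En2.
have an : a != 0 by rewrite gt_eqF.
have bn : b != 0 by rewrite gt_eqF.
have F0 : n1 * a ^+ 2 + c * a * b = 1.
  have := congr1 (fun x => x * a) E0; rewrite mulVf //; move=> <-; ring.
have F1 : c * a * b + n2 * b ^+ 2 = 1.
  have := congr1 (fun x => x * b) E1; rewrite mulVf //; move=> <-; ring.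
have K : n1 * a ^+ 2 = n2 * b ^+ 2 by lra.
have n1ge : 0 <= n1 by rewrite sumr_ge0 // => k _; rewrite -expr2 sqr_ge0.
have n2ge : 0 <= n2 by rewrite sumr_ge0 // => k _; rewrite -expr2 sqr_ge0.
have n1n : n1 != 0.
  apply/negP => /eqP n10.
  have z : forall k, G k 0 = 0.
    move=> k; apply/eqP; rewrite -sqrf_eq0 expr2.
    have := n10; rewrite /n1 => /eqP; rewrite psumr_eq0; last first.
      by move=> i _; rewrite -expr2 sqr_ge0.
    by move/allP => /(_ k (mem_index_enum _)) /implyP; apply.
  have c0 : c = 0 by rewrite /c big1 // => k _; rewrite z mulr0.
  by move: F1 K; rewrite c0 n10; lra.
have s1 : 0 < Num.sqrt n1 by rewrite sqrtr_gt0 lt_neqAle eq_sym n1n.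
have S : Num.sqrt n1 * a = Num.sqrt n2 * b.
  have h1 : Num.sqrt n1 * a = Num.sqrt (n1 * a ^+ 2).
    by rewrite sqrtrM // sqrtr_sqr ger0_norm // ltW.
  have h2 : Num.sqrt n2 * b = Num.sqrt (n2 * b ^+ 2).
    by rewrite sqrtrM // sqrtr_sqr ger0_norm // ltW.
  by rewrite h1 h2 K.
have s1n : Num.sqrt n1 != 0 by rewrite gt_eqF.
apply: (mulfI s1n); rewrite mulrA S; field.
by rewrite s1n bn.
Qed.
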